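(* Let $I\subseteq\mathbb{R}$ be an open interval and let $f$ be a non-constant real analytic function on $I$ with $f(\mathbb{Q}\cap I)\subseteq\mathbb{Q}$. Assume that there exists a function $\psi:\mathbb{R}_{>0}\to\mathbb{R}_{>0}$ with the following properties: (i) $\psi(m)=o(m)$ as $m\to\infty$; (ii) for every $\zeta\in\mathscr{L}\cap I$ and every integer $m\geq 1$ one can find coprime integers $p_m,q_m\geq 2$ such that $\left|\zeta-\frac{p_m}{q_m}\right|\leq q_m^{-m}$ and, writing $f(p_m/q_m)=p_m'/q_m'$ in lowest terms, one has $q_m'\leq q_m^{\psi(m)}$. Then $f(\mathscr{L}\cap I)\subseteq\mathscr{L}$.
   Context: $\mathscr{L}$ denotes the set of Liouville numbers: real irrational numbers $\zeta$ such that for every $\eta>0$ the inequality $|\zeta-y/x|\leq x^{-\eta}$ has infinitely many rational solutions $y/x$ with $x\geq 1$ (equivalently, real numbers with infinite irrationality exponent). For a set $A$, $f(A)=\{f(x):x\in A\}$. *)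

(* Defs.v *)
From Stdlib Require Import Reals ZArith.
From Coquelicot Require Import Coquelicot.
Open Scope R_scope.

Definition in_interval (a b : Rbar) (x : R) : Prop :=
  Rbar_lt a x /\ Rbar_lt x b.

Definition real_analytic_on (a b : Rbar) (f : R -> R) : Prop :=
  forall x0, in_interval a b x0 ->
    exists (c : nat -> R) (r : R), 0 < r /\
      forall x, Rabs (x - x0) < r -> is_pseries c (x - x0) (f x).

Definition is_rational (x : R) : Prop :=
  exists (p q : Z), q <> 0%Z /\ x = IZR p / IZR q.

(* Liouville numbers: irrational zeta such that for every eta > 0 the
   inequality |zeta - y/x| <= x^(-eta) has infinitely many rational solutions
   y/x with x >= 1, i.e. solutions (x,y) with arbitrarily large x. *)
Definition Liouville (zeta : R) : Prop :=
  ~ is_rational zeta /\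
  forall eta : R, 0 < eta ->
    forall N : Z, exists x y : Z, (1 <= x)%Z /\ (N < x)%Z /\
      Rabs (zeta - IZR y / IZR x) <= Rpower (IZR x) (- eta).

(* Main.v *)
Require Import Defs.
From Stdlib Require Import Reals ZArith Lra Lia Classical.
From Coquelicot Require Import Coquelicot.
Open Scope R_scope.

Definition Acc0 (P : R -> Prop) :=
  forall eps, 0 < eps -> exists h, h <> 0 /\ Rabs h < eps /\ P h.

Lemma in_int_between a b x y z : in_interval a b x -> in_interval a b y ->
  (x <= z <= y \/ y <= z <= x) -> in_interval a b z.
Proof.
  unfold in_interval; destruct a as [a| |], b as [b| |]; simpl;
  intros [H1 H2] [H3 H4] H5; split; auto; lra.
Qed.

Lemma cont0 g v : continuity_pt g 0 -> Acc0 (fun h => g h = v) -> g 0 = v.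
Proof.
  intros Hc HA. destruct (Req_dec (g 0) v) as [E|E]; [exact E|].
  exfalso.
  destruct (Hc (Rabs (g 0 - v))) as [alp [Halp H]].
  { apply Rabs_pos_lt; lra. }
  destruct (HA alp Halp) as [h [Hh0 [Hh Hgh]]].
  assert (H0 : dist R_met (g h) (g 0) < Rabs (g 0 - v)).
  { apply H. split. split; [exact I| now apply not_eq_sym]. simpl. unfold R_dist.
    rewrite Rminus_0_r. exact Hh. }
  simpl in H0. unfold R_dist in H0. rewrite Hgh in H0. rewrite Rabs_minus_sym in H0. lra.
Qed.

Lemma Zlem : forall n a, Rbar_lt 0 (CV_radius a) ->
  Acc0 (fun h => PSeries a h = 0) -> a n = 0.
Proof.
  assert (base : forall a, Rbar_lt 0 (CV_radius a) ->
     Acc0 (fun h => PSeries a h = 0) -> a O = 0).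
  { intros a Hr HA. rewrite <- PSeries_0. apply cont0; auto.
    apply PSeries_continuity. rewrite Rabs_R0. exact Hr. }
  induction n as [|n IH]; intros a Hr HA.
  - now apply base.
  - assert (H0 := base a Hr HA).
    change (a (S n)) with (PS_decr_1 a n).
    apply IH. rewrite CV_radius_decr_1; exact Hr.
    intros eps Heps. destruct (HA eps Heps) as [h [Hh0 [Hh Hp]]].
    exists h; repeat split; auto.
    rewrite (PSeries_decr_1_aux a h H0) in Hp.
    destruct (Rmult_integral _ _ Hp); [contradiction|auto].
Qed.

Lemma CVR c R : (forall h, Rabs h < R -> ex_pseries c h) ->
  forall h, Rabs h < R -> Rbar_lt (Rabs h) (CV_radius c).
Proof.
  intros Hex h Hh.
  pose proof (Rabs_pos h).
  set (x := (Rabs h + R)/2).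
  assert (Hx : Rabs x < R) by (rewrite (Rabs_pos_eq x); unfold x; lra).
  assert (Hl : is_lim_seq (fun n => c n * x ^ n) 0).
  { destruct (Hex x Hx) as [l Hl].
    assert (He : ex_series (fun k => scal (pow_n x k) (c k))) by (exists l; exact Hl).
    apply ex_series_lim_0 in He.
    eapply is_lim_seq_ext; [|exact He]. intro n. simpl.
    rewrite pow_n_pow. unfold scal; simpl. unfold mult; simpl. ring. }
  assert (Hle : Rbar_le (Rabs x) (CV_radius c)).
  { apply Rbar_not_lt_le. intro Hc. exact (CV_disk_outside c x Hc Hl). }
  eapply Rbar_lt_le_trans; [|exact Hle]. simpl.
  rewrite (Rabs_pos_eq x); unfold x; lra.
Qed.

Lemma ana_at a b f x0 : real_analytic_on a b f -> in_interval a b x0 ->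
  exists c R, 0 < R /\ forall h, Rabs h < R ->
    f (x0 + h) = PSeries c h /\ Rbar_lt (Rabs h) (CV_radius c).
Proof.
  intros Ha Hx. destruct (Ha x0 Hx) as [c [R [HR Hs]]].
  assert (Hs' : forall h, Rabs h < R -> is_pseries c h (f (x0+h))).
  { intros h Hh. specialize (Hs (x0+h)). replace (x0+h-x0) with h in Hs by ring.
    apply Hs; exact Hh. }
  exists c, R; split; auto. intros h Hh; split.
  - symmetry; apply is_pseries_unique, Hs'; auto.
  - apply (CVR c R); auto. intros h' Hh'. eexists; apply Hs'; exact Hh'.
Qed.

Lemma Lid f x0 c R v : 0 < R ->
  (forall h, Rabs h < R -> f (x0 + h) = PSeries c h /\ Rbar_lt (Rabs h) (CV_radius c)) ->
  Acc0 (fun h => f (x0 + h) = v) -> forall h, Rabs h < R -> f (x0 + h) = v.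
Proof.
  intros HR Hf HA.
  assert (HA' : Acc0 (fun h => PSeries c h = v /\ Rabs h < R)).
  { intros eps Heps. destruct (HA (Rmin eps R)) as [h [h0 [hl hv]]].
    apply Rmin_pos; auto.
    exists h. assert (Rabs h < R) by (eapply Rlt_le_trans; [exact hl| apply Rmin_r]).
    repeat split; auto. eapply Rlt_le_trans; [exact hl|apply Rmin_l].
    rewrite <- hv. symmetry; apply Hf; auto. }
  assert (HCV0 : Rbar_lt 0 (CV_radius c)).
  { destruct (Hf 0) as [_ H]. rewrite Rabs_R0; auto. rewrite Rabs_R0 in H; exact H. }
  assert (Hc0 : c O = v).
  { rewrite <- PSeries_0. apply cont0. apply PSeries_continuity. rewrite Rabs_R0; auto.
    intros eps Heps. destruct (HA' eps Heps) as [h [? [? [? ?]]]]. exists h; auto. }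
  assert (Hz : forall n, PS_decr_1 c n = 0).
  { intro n. apply Zlem. rewrite CV_radius_decr_1; auto.
    intros eps Heps. destruct (HA' eps Heps) as [h [h0 [hl [hv hR]]]].
    exists h; repeat split; auto.
    destruct (Hf h hR) as [_ Hcv].
    rewrite (PSeries_decr_1 c h (CV_radius_inside c h Hcv)) in hv.
    rewrite Hc0 in hv. assert (H : h * PSeries (PS_decr_1 c) h = 0) by lra.
    destruct (Rmult_integral _ _ H); [contradiction|auto]. }
  intros h Hh. destruct (Hf h Hh) as [E Hcv]. rewrite E.
  rewrite (PSeries_decr_1 c h (CV_radius_inside c h Hcv)).
  rewrite (PSeries_ext _ (fun _ => 0)); auto. rewrite PSeries_const_0. rewrite Hc0; ring.
Qed.

Lemma Lloc a b f x0 v : real_analytic_on a b f -> in_interval a b x0 ->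
  Acc0 (fun h => f (x0 + h) = v) ->
  exists R, 0 < R /\ forall h, Rabs h < R -> f (x0 + h) = v.
Proof.
  intros Ha Hx HA. destruct (ana_at a b f x0 Ha Hx) as [c [R [HR Hf]]].
  exists R; split; auto. eapply Lid; eauto.
Qed.

Lemma Llip a b f x0 : real_analytic_on a b f -> in_interval a b x0 ->
  exists K d, 0 < K /\ 0 < d /\ forall h, Rabs h < d ->
    Rabs (f (x0 + h) - f x0) <= K * Rabs h.
Proof.
  intros Ha Hx. destruct (ana_at a b f x0 Ha Hx) as [c [R [HR Hf]]].
  assert (HCV0 : Rbar_lt 0 (CV_radius c)).
  { destruct (Hf 0) as [_ H]. rewrite Rabs_R0; auto. rewrite Rabs_R0 in H; exact H. }
  pose (G := PSeries (PS_decr_1 c)).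
  assert (Hcont : continuity_pt G 0).
  { apply PSeries_continuity. rewrite CV_radius_decr_1, Rabs_R0; auto. }
  destruct (Hcont 1 Rlt_0_1) as [alp [Halp Hal]].
  exists (Rabs (G 0) + 1), (Rmin alp R). split. pose proof (Rabs_pos (G 0)); lra.
  split. apply Rmin_pos; auto.
  intros h Hh.
  assert (hR : Rabs h < R) by (eapply Rlt_le_trans; [exact Hh|apply Rmin_r]).
  assert (ha : Rabs h < alp) by (eapply Rlt_le_trans; [exact Hh|apply Rmin_l]).
  destruct (Hf h hR) as [E Hcv]. destruct (Hf 0) as [E0 _]. rewrite Rabs_R0; auto.
  rewrite Rplus_0_r in E0. rewrite E, E0, PSeries_0.
  rewrite (PSeries_decr_1 c h (CV_radius_inside c h Hcv)).
  replace (c O + h * PSeries (PS_decr_1 c) h - c O) with (h * G h) by (unfold G; ring).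
  rewrite Rabs_mult, Rmult_comm. apply Rmult_le_compat_r. apply Rabs_pos.
  assert (HG : Rabs (G h - G 0) < 1).
  { destruct (Req_dec h 0) as [-> | Hne].
    - rewrite Rminus_diag, Rabs_R0; lra.
    - apply (Hal h). split. split; [exact I| now apply not_eq_sym].
      simpl. unfold R_dist. rewrite Rminus_0_r. exact ha. }
  pose proof (Rabs_triang (G h - G 0) (G 0)).
  replace (G h - G 0 + G 0) with (G h) in H by ring. lra.
Qed.
Lemma Lglob a b f z v : real_analytic_on a b f -> in_interval a b z ->
  Acc0 (fun h => f (z + h) = v) -> forall w, in_interval a b w -> f w = v.
Proof.
  intros Ha Hz HA w Hw.
  destruct (Req_dec (f w) v) as [E|Hne]; [exact E|exfalso].
  destruct (Lloc a b f z v Ha Hz HA) as [R0 [HR0 H0]].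
  assert (Hwz : w <> z).
  { intro E. subst w. apply Hne. rewrite <- (Rplus_0_r z). apply H0. rewrite Rabs_R0; auto. }
  assert (Hex : exists sg D, 0 < D /\ w = z + sg * D /\ (sg = 1 \/ sg = -1)).
  { destruct (Rlt_dec z w).
    - exists 1, (w - z). repeat split; [lra|ring|left; auto].
    - exists (-1), (z - w). repeat split; [lra|ring|right; auto]. }
  destruct Hex as [sg [D [HD [HwD Hs]]]].
  assert (Hsg1 : Rabs sg = 1).
  { destruct Hs as [-> | ->]. apply Rabs_R1. rewrite Rabs_left; lra. }
  assert (Hin : forall u, 0 <= u <= D -> in_interval a b (z + sg * u)).
  { intros u Hu. apply (in_int_between a b z w); auto. destruct Hs as [-> | ->]; lra. }
  pose (E := fun t => 0 <= t <= D /\ forall u, 0 <= u <= t -> f (z + sg * u) = v).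
  assert (HEb : bound E). { exists D. intros t [Ht _]. lra. }
  assert (HE0 : E (Rmin (R0/2) D)).
  { split. split. apply Rlt_le, Rmin_pos; lra. apply Rmin_r.
    intros u Hu. apply H0. rewrite Rabs_mult, Hsg1, Rmult_1_l, Rabs_pos_eq by lra.
    pose proof (Rmin_l (R0/2) D). lra. }
  destruct (completeness E HEb (ex_intro _ _ HE0)) as [s [Hub Hlub]].
  assert (Hs0 : Rmin (R0/2) D <= s) by (apply Hub; exact HE0).
  assert (HsD : s <= D). { apply Hlub. intros t [Ht _]; lra. }
  assert (Hspos : 0 < s). { assert (0 < Rmin (R0/2) D) by (apply Rmin_pos; lra). lra. }
  assert (Hbelow : forall u, 0 <= u < s -> f (z + sg * u) = v).
  { intros u Hu. destruct (classic (exists t, E t /\ u < t)) as [[t [[_ Ht] Hut]]|Hn].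
    - apply Ht; lra.
    - exfalso. assert (s <= u).
      { apply Hlub. intros t Et. destruct (Rle_dec t u); auto. exfalso; apply Hn; exists t; split; auto; lra. }
      lra. }
  assert (Hy : in_interval a b (z + sg * s)) by (apply Hin; lra).
  assert (HAy : Acc0 (fun h => f (z + sg * s + h) = v)).
  { intros eps Heps.
    assert (Hk1 : 0 < Rmin eps s) by (apply Rmin_pos; lra).
    pose proof (Rmin_l eps s). pose proof (Rmin_r eps s).
    exists (- sg * (Rmin eps s / 2)). repeat split.
    - destruct Hs as [-> | ->]; lra.
    - rewrite ?Rabs_Ropp, Rabs_mult, ?Rabs_Ropp, Hsg1, Rmult_1_l, Rabs_pos_eq; lra.
    - replace (z + sg*s + -sg*(Rmin eps s / 2)) with (z + sg*(s-Rmin eps s / 2)) by ring.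
      apply Hbelow; lra. }
  destruct (Lloc a b f _ v Ha Hy HAy) as [R1 [HR1 H1]].
  pose (t1 := Rmin (s + R1/2) D).
  assert (Et1 : E t1).
  { pose proof (Rmin_l (s + R1/2) D). pose proof (Rmin_r (s + R1/2) D).
    assert (0 <= t1). { unfold t1, Rmin. destruct (Rle_dec (s + R1/2) D); lra. }
    split. split; auto.
    intros u Hu. destruct (Rlt_dec u s). apply Hbelow; lra.
    replace (z + sg*u) with (z + sg*s + sg*(u - s)) by ring. apply H1.
    rewrite Rabs_mult, Hsg1, Rmult_1_l, Rabs_pos_eq by lra. unfold t1 in Hu. lra. }
  assert (Ht1 : t1 <= s) by (apply Hub; exact Et1).
  unfold t1, Rmin in Ht1. destruct (Rle_dec (s + R1/2) D); [lra|].
  apply Hne. rewrite HwD. replace (z + sg * D) with (z + sg * s + 0).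
  apply H1. rewrite Rabs_R0; lra.
  assert (s = D) by lra. subst s. ring.
Qed.

Lemma Lsep t : ~ is_rational t -> forall n : nat, exists eps, 0 < eps /\
  forall p q : Z, (1 <= q)%Z -> IZR q <= INR n -> eps <= Rabs (t - IZR p / IZR q).
Proof.
  intros Ht. induction n as [|n IHn].
  - exists 1. split; [lra|]. intros p q Hq Hq'. apply IZR_le in Hq. simpl in Hq'. lra.
  - destruct IHn as [eps [Heps IH]].
    set (u := INR (S n) * t).
    destruct (archimed u) as [Hu1 Hu2].
    set (k := (up u - 1)%Z).
    assert (Hk : IZR k = IZR (up u) - 1) by (unfold k; rewrite minus_IZR; reflexivity).
    assert (HkS : INR (S n) = IZR (Z.of_nat (S n))) by apply INR_IZR_INZ.
    assert (Hpos : 0 < INR (S n)) by (apply lt_0_INR; lia).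
    assert (Hne : u <> IZR k).
    { intro E. apply Ht. exists k, (Z.of_nat (S n)). split; [lia|].
      rewrite <- HkS, <- E. unfold u. field. lra. }
    set (d := Rmin (u - IZR k) (IZR k + 1 - u)).
    assert (Hd : 0 < d) by (unfold d; apply Rmin_pos; lra).
    exists (Rmin eps (d / INR (S n))). split.
    { apply Rmin_pos; auto. apply Rdiv_lt_0_compat; lra. }
    intros p q Hq Hqn.
    assert (Hc : IZR q <= INR n \/ q = Z.of_nat (S n)).
    { destruct (Rle_dec (IZR q) (INR n)) as [|Hgt]; [left; auto|right].
      rewrite INR_IZR_INZ in Hgt. rewrite HkS in Hqn.
      apply Rnot_le_lt in Hgt. apply lt_IZR in Hgt. apply le_IZR in Hqn. lia. }
    destruct Hc as [Hc| ->].
    + eapply Rle_trans; [apply Rmin_l|]. apply IH; auto.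
    + eapply Rle_trans; [apply Rmin_r|]. rewrite <- HkS.
      replace (t - IZR p / INR (S n)) with ((u - IZR p) / INR (S n)) by (unfold u; field; lra).
      unfold Rdiv. rewrite Rabs_mult, (Rabs_pos_eq (/ _)) by (left; apply Rinv_0_lt_compat; lra).
      apply Rmult_le_compat_r; [left; apply Rinv_0_lt_compat; lra|].
      pose proof (Rmin_l (u - IZR k) (IZR k + 1 - u)).
      pose proof (Rmin_r (u - IZR k) (IZR k + 1 - u)). fold d in H, H0.
      destruct (Z_le_gt_dec p k) as [Hp|Hp].
      * apply IZR_le in Hp. rewrite Rabs_pos_eq; lra.
      * assert (Hp' : (k + 1 <= p)%Z) by lia. apply IZR_le in Hp'. rewrite plus_IZR in Hp'.
        rewrite Rabs_left; lra.
Qed.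

Lemma big_nat (X : R) : exists m : nat, X < INR m /\ (1 <= m)%nat.
Proof.
  destruct (archimed (Rmax X 1)) as [H1 _].
  pose proof (Rmax_l X 1). pose proof (Rmax_r X 1).
  assert (Hz : (0 <= up (Rmax X 1))%Z) by (apply le_IZR; lra).
  exists (Z.to_nat (up (Rmax X 1))).
  rewrite INR_IZR_INZ, Z2Nat.id by exact Hz. split; [lra|].
  assert (1 < IZR (up (Rmax X 1))) by lra. apply lt_IZR in H2. lia.
Qed.

Lemma pow2 m : INR m + 1 <= 2 ^ m.
Proof.
  induction m as [|m IH]. simpl; lra.
  rewrite S_INR. simpl. pose proof (pos_INR m). lra.
Qed.

Lemma inv2m (m : nat) x : 0 < x -> / x < INR m -> / 2 ^ m < x.
Proof.
  intros Hx Hm. pose proof (pow2 m).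
  assert (0 < / x) by (apply Rinv_0_lt_compat; lra).
  rewrite <- (Rinv_inv x). apply Rinv_lt_contravar; nra.
Qed.

Lemma psi_small (psi : R -> R) : is_lim (fun m => psi m / m) p_infty 0 ->
  forall e, 0 < e -> exists M, forall x, M < x -> psi x / x < e.
Proof.
  intros H e He. apply is_lim_spec in H. destruct (H (mkposreal e He)) as [M HM].
  exists M. intros x Hx. specialize (HM x Hx). simpl in HM. rewrite Rminus_0_r in HM.
  apply Rabs_lt_between in HM. lra.
Qed.

Lemma Rpow_lb q y : 2 <= q -> 0 <= y -> 1 + y * ln 2 <= Rpower q y.
Proof.
  intros Hq Hy. unfold Rpower. eapply Rle_trans; [|apply exp_ineq1_le].
  assert (ln 2 <= ln q).
  { destruct (Req_dec q 2) as [-> |]; [lra|]. left; apply ln_increasing; lra. }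
  nra.
Qed.

Lemma ln2_pos : 0 < ln 2.
Proof. rewrite <- ln_1. apply ln_increasing; lra. Qed.

Lemma div_le_inv K a b : 0 < a -> 0 < b -> K * b <= a -> K / a <= / b.
Proof.
  intros Ha Hb H.
  replace (K/a) with ((K*b) * / (a*b)) by (field; lra).
  replace (/b) with (a * /(a*b)) by (field; lra).
  apply Rmult_le_compat_r; auto. left; apply Rinv_0_lt_compat; nra.
Qed.

Theorem theorem2p1 (a b : Rbar) (f : R -> R) (psi : R -> R) :
  Rbar_lt a b ->
  real_analytic_on a b f ->
  (* f is non-constant on I *)
  (exists x y, in_interval a b x /\ in_interval a b y /\ f x <> f y) ->
  (* f(Q cap I) subset Q *)
  (forall x, in_interval a b x -> is_rational x -> is_rational (f x)) ->
  (* psi : R_{>0} -> R_{>0} *)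
  (forall m, 0 < m -> 0 < psi m) ->
  (* (i) psi(m) = o(m) as m -> oo *)
  is_lim (fun m => psi m / m) p_infty 0 ->
  (* (ii) *)
  (forall zeta, Liouville zeta -> in_interval a b zeta ->
     forall m : nat, (1 <= m)%nat ->
       exists p q : Z, (2 <= p)%Z /\ (2 <= q)%Z /\ Z.gcd p q = 1%Z /\
         in_interval a b (IZR p / IZR q) /\
         Rabs (zeta - IZR p / IZR q) <= / (IZR q ^ m) /\
         exists p' q' : Z, (1 <= q')%Z /\ Z.gcd p' q' = 1%Z /\
           f (IZR p / IZR q) = IZR p' / IZR q' /\
           IZR q' <= Rpower (IZR q) (psi (INR m))) ->
  forall zeta, Liouville zeta -> in_interval a b zeta -> Liouville (f zeta).
Proof.
  intros Hab Ha Hnc Hrat Hpsi Hlim Hii zeta Hz Iz.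
  destruct (Llip a b f zeta Ha Iz) as [K [d [HK [Hd Hlip]]]].
  pose proof ln2_pos as ln2.
  assert (Happ : forall m : nat, (1 <= m)%nat -> / 2 ^ m < d ->
     exists q p' q' : Z, (2 <= q)%Z /\ (1 <= q')%Z /\
       (exists h, h <> 0 /\ Rabs h <= / 2^m /\ f (zeta + h) = IZR p' / IZR q') /\
       Rabs (f zeta - IZR p' / IZR q') <= K / IZR q ^ m /\
       IZR q' <= Rpower (IZR q) (psi (INR m))).
  { intros m Hm Hmd.
    destruct (Hii zeta Hz Iz m Hm) as [p [q [Hp [Hq [_ [_ [Hpq [p' [q' [Hq' [_ [Hf Hq'b]]]]]]]]]]]].
    assert (Hq2 : 2 <= IZR q) by (apply IZR_le; auto).
    assert (H2m : / IZR q ^ m <= / 2 ^ m).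
    { apply Rinv_le_contravar. apply pow_lt; lra. apply pow_incr; lra. }
    assert (Hqm : 0 < IZR q ^ m) by (apply pow_lt; lra).
    exists q, p', q'. split; auto. split; auto.
    set (h := IZR p / IZR q - zeta).
    assert (Hh : Rabs h <= / IZR q ^ m) by (unfold h; rewrite Rabs_minus_sym; exact Hpq).
    assert (Hfh : f (zeta + h) = IZR p' / IZR q') by (unfold h; rewrite <- Hf; f_equal; ring).
    split.
    - exists h. split; [|split; auto; lra].
      intro E. apply (proj1 Hz). exists p, q. split; [lia|]. unfold h in E. lra.
    - split; auto. rewrite <- Hfh, Rabs_minus_sym.
      eapply Rle_trans. apply Hlip. lra.
      unfold Rdiv. apply Rmult_le_compat_l; lra. }
  assert (Hirr : ~ is_rational (f zeta)).
  { intros [A [B [HB0 HAB]]].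
    assert (HAcc : Acc0 (fun h => f (zeta + h) = f zeta)).
    { intros eps Heps.
      destruct (psi_small psi Hlim (1/2)) as [M HM]; [lra|].
      assert (Hmin : 0 < Rmin eps d) by (apply Rmin_pos; lra).
      destruct (big_nat (Rmax (Rmax M 1) (Rmax (/ Rmin eps d) (2 * K * Rabs (IZR B) / ln 2))))
        as [m [Hm Hm1]].
      pose proof (Rmax_l (Rmax M 1) (Rmax (/ Rmin eps d) (2 * K * Rabs (IZR B) / ln 2))).
      pose proof (Rmax_r (Rmax M 1) (Rmax (/ Rmin eps d) (2 * K * Rabs (IZR B) / ln 2))).
      pose proof (Rmax_l M 1). pose proof (Rmax_r M 1).
      pose proof (Rmax_l (/ Rmin eps d) (2 * K * Rabs (IZR B) / ln 2)).
      pose proof (Rmax_r (/ Rmin eps d) (2 * K * Rabs (IZR B) / ln 2)).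
      assert (H2m : / 2 ^ m < Rmin eps d) by (apply inv2m; auto; lra).
      pose proof (Rmin_l eps d). pose proof (Rmin_r eps d).
      destruct (Happ m Hm1 ltac:(lra)) as [q [p' [q' [Hq [Hq' [[h [Hh0 [Hh Hfh]]] [Hbd Hq'b]]]]]]].
      exists h. split; auto. split; [lra|].
      rewrite Hfh, HAB.
      destruct (Req_dec (IZR p' / IZR q') (IZR A / IZR B)) as [E|Hne]; [exact E|exfalso].
      assert (Hq2 : 2 <= IZR q) by (apply IZR_le; auto).
      assert (Hq'1 : 1 <= IZR q') by (apply IZR_le; auto).
      assert (HB : IZR B <> 0) by (apply not_0_IZR; auto).
      set (n := (p' * B - A * q')%Z).
      assert (Hn : IZR n = (IZR p' / IZR q' - IZR A / IZR B) * (IZR q' * IZR B)).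
      { unfold n. rewrite minus_IZR, !mult_IZR. field. lra. }
      assert (Hn0 : n <> 0%Z).
      { intro E. apply Hne. unfold n in E. apply (f_equal IZR) in E.
        rewrite minus_IZR, !mult_IZR in E.
        apply (Rmult_eq_reg_r (IZR q' * IZR B)); [|apply Rmult_integral_contrapositive; split; lra].
        field_simplify; try lra. }
      assert (Hn1 : 1 <= Rabs (IZR n)).
      { destruct (Z_lt_le_dec n 0) as [Hl|Hl].
        - assert (Hl1 : (n <= -1)%Z) by lia. apply IZR_le in Hl1. rewrite Rabs_left; lra.
        - assert (Hl1 : (1 <= n)%Z) by lia. apply IZR_le in Hl1. rewrite Rabs_pos_eq; lra. }
      rewrite Hn, Rabs_mult, Rabs_mult, (Rabs_pos_eq (IZR q')) in Hn1 by lra.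
      rewrite HAB, Rabs_minus_sym in Hbd.
      assert (Hqm : 0 < IZR q ^ m) by (apply pow_lt; lra).
      assert (HBp : 0 < Rabs (IZR B)) by (apply Rabs_pos_lt; auto).
      assert (Hkey : IZR q ^ m <= K * Rabs (IZR B) * IZR q').
      { set (X := Rabs (IZR p' / IZR q' - IZR A / IZR B)) in *.
        assert (X * IZR q ^ m <= K).
        { apply (Rmult_le_compat_r (IZR q ^ m)) in Hbd; [|lra].
          unfold Rdiv in Hbd. rewrite Rmult_assoc, Rinv_l in Hbd; lra. }
        assert (0 <= IZR q' * Rabs (IZR B)) by nra.
        assert (0 <= (X * (IZR q' * Rabs (IZR B)) - 1) * IZR q ^ m) by (apply Rmult_le_pos; lra).
        assert (0 <= (K - X * IZR q ^ m) * (IZR q' * Rabs (IZR B))) by (apply Rmult_le_pos; lra).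
        nra. }
      assert (Hpsim : psi (INR m) <= INR m / 2).
      { assert (Hpm : 0 < INR m) by lra.
        specialize (HM (INR m) ltac:(lra)).
        apply (Rmult_lt_compat_r (INR m)) in HM; auto.
        unfold Rdiv in HM. rewrite Rmult_assoc, Rinv_l in HM; lra. }
      set (P := Rpower (IZR q) (INR m / 2)).
      assert (HP : IZR q ^ m = P * P).
      { unfold P. rewrite <- Rpower_plus, <- Rpower_pow by lra. f_equal; field. }
      assert (Hq'P : IZR q' <= P).
      { eapply Rle_trans; [exact Hq'b|]. apply Rle_Rpower; lra. }
      assert (HPlb : 1 + INR m / 2 * ln 2 <= P) by (apply Rpow_lb; lra).
      assert (K * Rabs (IZR B) < INR m / 2 * ln 2).
      { assert (H7 : 2 * K * Rabs (IZR B) / ln 2 < INR m) by lra.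
        apply (Rmult_lt_compat_r (ln 2)) in H7; auto.
        unfold Rdiv in H7. rewrite Rmult_assoc, Rinv_l in H7; lra. }
      assert (0 < P) by lra.
      nra. }
    destruct Hnc as [x [y [Hx [Hy Hxy]]]].
    apply Hxy. rewrite (Lglob a b f zeta (f zeta) Ha Iz HAcc x Hx).
    rewrite (Lglob a b f zeta (f zeta) Ha Iz HAcc y Hy). reflexivity. }
  split; [exact Hirr|].
  intros eta Heta N.
  destruct (Lsep (f zeta) Hirr (Z.to_nat N)) as [eps [Heps Hsep]].
  assert (He2 : 0 < / (2 * eta)) by (apply Rinv_0_lt_compat; lra).
  destruct (psi_small psi Hlim (/ (2*eta)) He2) as [M HM].
  assert (Hmin : 0 < Rmin (eps / K) d) by (apply Rmin_pos; [apply Rdiv_lt_0_compat|]; lra).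
  destruct (big_nat (Rmax (Rmax M 1) (Rmax (/ Rmin (eps/K) d) (2 * K / ln 2))))
    as [m [Hm Hm1]].
  pose proof (Rmax_l (Rmax M 1) (Rmax (/ Rmin (eps/K) d) (2 * K / ln 2))).
  pose proof (Rmax_r (Rmax M 1) (Rmax (/ Rmin (eps/K) d) (2 * K / ln 2))).
  pose proof (Rmax_l M 1). pose proof (Rmax_r M 1).
  pose proof (Rmax_l (/ Rmin (eps/K) d) (2 * K / ln 2)).
  pose proof (Rmax_r (/ Rmin (eps/K) d) (2 * K / ln 2)).
  assert (H2m : / 2 ^ m < Rmin (eps/K) d) by (apply inv2m; auto; lra).
  pose proof (Rmin_l (eps/K) d). pose proof (Rmin_r (eps/K) d).
  destruct (Happ m Hm1 ltac:(lra)) as [q [p' [q' [Hq [Hq' [_ [Hbd Hq'b]]]]]]].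
  assert (Hq2 : 2 <= IZR q) by (apply IZR_le; auto).
  assert (Hq'1 : 1 <= IZR q') by (apply IZR_le; auto).
  assert (Hqm : 0 < IZR q ^ m) by (apply pow_lt; lra).
  assert (H2q : / IZR q ^ m <= / 2 ^ m).
  { apply Rinv_le_contravar. apply pow_lt; lra. apply pow_incr; lra. }
  assert (Hsmall : K / IZR q ^ m < eps).
  { unfold Rdiv. assert (H7 : K * / IZR q ^ m < K * (eps / K)).
    { apply Rmult_lt_compat_l; lra. }
    replace (K * (eps / K)) with eps in H7 by (field; lra). exact H7. }
  exists q', p'. split; [lia|]. split.
  - destruct (Z_lt_le_dec N q') as [|HN]; auto. exfalso.
    assert (eps <= Rabs (f zeta - IZR p' / IZR q')).
    { apply Hsep; [lia|]. rewrite INR_IZR_INZ, Z2Nat.id by lia. apply IZR_le; lia. }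
    lra.
  - eapply Rle_trans; [exact Hbd|]. rewrite Rpower_Ropp.
    assert (Hpm : 0 < INR m) by lra.
    set (P := Rpower (IZR q) (INR m / 2)).
    assert (HP : IZR q ^ m = P * P).
    { unfold P. rewrite <- Rpower_plus, <- Rpower_pow by lra. f_equal; field. }
    assert (HPlb : 1 + INR m / 2 * ln 2 <= P) by (apply Rpow_lb; lra).
    assert (HKP : K <= P).
    { assert (H7 : 2 * K / ln 2 < INR m) by lra.
      apply (Rmult_lt_compat_r (ln 2)) in H7; auto.
      unfold Rdiv in H7. rewrite Rmult_assoc, Rinv_l in H7; lra. }
    assert (Hpe : psi (INR m) * eta <= INR m / 2).
    { specialize (HM (INR m) ltac:(lra)).
      apply (Rmult_lt_compat_r (INR m * eta)) in HM; [|nra].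
      replace (psi (INR m) / INR m * (INR m * eta)) with (psi (INR m) * eta) in HM by (field; lra).
      replace (/ (2 * eta) * (INR m * eta)) with (INR m / 2) in HM by (field; lra). lra. }
    assert (Hq'e : Rpower (IZR q') eta <= P).
    { eapply Rle_trans. apply Rle_Rpower_l; [lra|split; [lra|exact Hq'b]].
      rewrite Rpower_mult. apply Rle_Rpower; lra. }
    assert (0 < Rpower (IZR q') eta) by (unfold Rpower; apply exp_pos).
    apply div_le_inv; auto. rewrite HP. nra.
Qed.
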